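(* Let $n=p_1^{\alpha_1}p_2^{\alpha_2}\cdots p_r^{\alpha_r}$, where $r\geq 2$, $\alpha_1,\ldots,\alpha_r$ are positive integers and $p_1<p_2<\cdots<p_r$ are primes. For every $i\in\{1,2,\ldots,r-1\}$, in $\mathcal{P}(C_n)$, $$\deg(p_i^{\alpha_i})-\deg(p_r^{\alpha_r})>p_i^{\alpha_i-1}\left[(p_r-1)\,\phi\!\left(\frac{n}{p_i^{\alpha_i}p_r^{\alpha_r}}\right)-\frac{n}{p_i^{\alpha_i-1}p_r^{\alpha_r}}\right].$$
   Context: For a finite group $G$, the power graph $\mathcal{P}(G)$ is the simple undirected graph with vertex set $G$ in which two distinct vertices are adjacent if one is an integral power of the other. $C_n$ denotes the cyclic group of order $n$, identified with $\mathbb{Z}_n=\{0,1,\ldots,n-1\}$, so a positive divisor $d<n$ of $n$ is regarded as the element $d\in\mathbb{Z}_n$. $\deg(a)$ is the degree of vertex $a$ in $\mathcal{P}(C_n)$ and $\phi$ is Euler's totient function. *)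

(* Defs.v *)
From HB Require Import structures.
From mathcomp Require Import all_boot all_order all_algebra.
Set Implicit Arguments. Unset Strict Implicit. Unset Printing Implicit Defensive.

(* Power graph of the cyclic group C_n, identified with Z_n = {0,...,n-1}
   (vertices are the ordinals 'I_n).  The group is additive, so the
   "integral powers" of a are the multiples k*a mod n; it suffices to let k
   range over 0..n-1 since k*a mod n is n-periodic in k (negative powers are
   also among these multiples). *)
Definition is_power (n a b : nat) : bool :=
  [exists k : 'I_n, b == (k * a) %% n].

Definition pcn_adj (n a b : nat) : bool :=
  (a != b) && (is_power n a b || is_power n b a).

Definition pcn_deg (n a : nat) : nat :=
  #|[set b : 'I_n | pcn_adj n a (val b)]|.

(* Main.v *)
Require Import Defs.
From HB Require Import structures.
From mathcomp Require Import all_boot all_order all_algebra.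
Import GRing.Theory Num.Theory.
From mathcomp Require Import all_fingroup all_solvable zify.

Definition S (f : nat -> bool) n := \sum_(0 <= i < n) (f i : nat).

Lemma dvd_mod d m x : d %| m -> (d %| x %% m) = (d %| x).
Proof. by move=> dm; rewrite /dvdn (modn_dvdm _ dm). Qed.

Lemma S_coprime M k : S (fun b => coprime b M) (k * M) = k * totient M.
Proof.
rewrite /S; elim: k => [|k IH]; first by rewrite mul0n big_geq.
rewrite mulSn addnC (big_cat_nat _ (leq_addr _ _)) //= IH.
rewrite -{1}[k * M]add0n big_addn addKn totient_count_coprime mulSn addnC; congr (_ + _).
apply: eq_bigr => i _; rewrite -coprime_modl addnC modnMDl coprime_modl coprime_sym //.
Qed.

Lemma S_dvd P M g : 0 < P ->
  S (fun i => (P %| i) && g i) (P * M) = S (fun c => g (P * c)) M.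
Proof.
move=> P0; rewrite /S; elim: M => [|M IH]; first by rewrite muln0 !big_geq.
rewrite mulnS addnC (big_cat_nat _ (leq_addr _ _)) //= IH big_nat_recr //=; congr (_ + _).
rewrite big_ltn; last lia.
have -> : P %| P * M by apply: dvdn_mulr.
rewrite big1_seq ?addn0 //.
move=> i /andP[_]; rewrite mem_index_iota => /andP[h1 h2].
have -> : i = P * M + (i - P * M) by lia.
rewrite dvdn_addr ?dvdn_mulr //.
case: (boolP (P %| i - P * M)) => //= /dvdn_leq; lia.
Qed.

Lemma IP1 P M b : 0 < P -> 0 < M -> b < P * M ->
  is_power (P * M) P b = (P %| b).
Proof.
move=> P0 M0 bn; rewrite /is_power; apply/existsP/idP.
  case=> k /eqP ->; rewrite dvd_mod; [exact: dvdn_mull | exact: dvdn_mulr].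
case/dvdnP=> c bc.
have cn : c < P * M by move: bn; rewrite bc; nia.
exists (Ordinal cn); rewrite /= modn_small -?bc //.
Qed.

Lemma IP2 P M b : 0 < P -> 1 < M -> coprime P M -> b < P * M ->
  is_power (P * M) b P = coprime b M.
Proof.
move=> P0 M1 cPM bn; rewrite /is_power; apply/existsP/idP.
  case=> k /eqP hP.
  have g1 : gcdn b M %| P.
    rewrite hP dvd_mod; last by apply: dvdn_mull; apply: dvdn_gcdr.
    by apply: dvdn_mull; apply: dvdn_gcdl.
  have : gcdn b M %| gcdn P M by rewrite dvdn_gcd g1 dvdn_gcdr.
  by rewrite (eqP cPM) dvdn1.
move=> cbM.
have nP : 0 < P * M by nia.
have kn : (b ^ (totient M).-1 * P) %% (P * M) < P * M by rewrite ltn_mod.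
exists (Ordinal kn); rewrite /= modnMml.
have tM : 0 < totient M by rewrite totient_gt0; lia.
have -> : b ^ (totient M).-1 * P * b = P * b ^ totient M.
  by rewrite -[X in P * b ^ X](prednK tM) expnS; nia.
by rewrite -muln_modr (Euler_exp_totient cbM) modn_small // muln1.
Qed.

Lemma card_S n (f : nat -> bool) :
  #|[set b : 'I_n | f (val b)]| = \sum_(0 <= i < n) (f i : nat).
Proof.
rewrite -sum1_card big_mkcond /= big_mkord; apply: eq_bigr => i _.
by rewrite inE; case: (f i).
Qed.

Lemma sum_eq1 n P : P < n -> \sum_(0 <= i < n) (i == P : nat) = 1.
Proof.
move=> Pn; rewrite (eq_bigr (fun i => if i == P then 1 else 0)); last by move=> i _; case: (i == P).
by rewrite -big_mkcond sum1_count /index_iota subn0 count_uniq_mem ?iota_uniq // mem_iota /= Pn.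
Qed.

Lemma sum_const1 n : \sum_(0 <= i < n) (true : nat) = n.
Proof. by rewrite sum1_size /index_iota subn0 size_iota. Qed.

Lemma deg_formula P M : 0 < P -> 1 < M -> coprime P M ->
  pcn_deg (P * M) P + totient M + 1 = M + P * totient M.
Proof.
move=> P0 M1 cPM.
have PM : P < P * M by nia.
have e1 : S (fun i => (P %| i) && coprime i M) (P * M) = totient M.
  rewrite S_dvd // -[X in _ = X]mul1n -S_coprime mul1n.
  by apply: eq_bigr => i _; rewrite coprimeMl cPM.
have e2 : S (fun i => (P %| i) && true) (P * M) = M.
  by rewrite S_dvd // /S sum_const1.
have e3 := S_coprime M P.
have key : pcn_deg (P * M) P + S (fun i => (P %| i) && coprime i M) (P * M)
   + \sum_(0 <= i < P * M) (i == P : nat)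
   = S (fun i => (P %| i) && true) (P * M) + S (fun b => coprime b M) (P * M).
  rewrite /pcn_deg card_S /S -!big_split /=.
  apply: eq_big_nat => i /andP[_ iPM].
  rewrite /pcn_adj IP1 ?IP2 //; try lia.
  case: (eqVneq P i) => [<-|ne] /=.
    by rewrite dvdnn; case: (coprime P M).
  by case: (P %| i); case: (coprime i M).
by rewrite e1 e2 e3 sum_eq1 in key.
Qed.

Lemma arith dP dQ N f x y p q P Q tQ tP : f <= N -> 0 < N -> p < q -> 0 < x -> 0 < y ->
  P = p * x -> Q = q * y -> tQ = q.-1 * y -> tP = p.-1 * x ->
  dP + tQ * f + 1 = Q * N + P * (tQ * f) ->
  dQ + tP * f + 1 = P * N + Q * (tP * f) ->
  dQ + x*(q.-1*f) < dP + x*(p * N).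
Proof.
move=> fN N0 pq x0 y0 -> -> -> -> D1 D2.
have [q' eq] : exists q', q = q'.+1 by exists q.-1; lia.
subst q; rewrite /= in D1 *.
have [p' eq] : exists p', p = p'.+1 by exists p.-1; lia.
subst p; rewrite /= in D2 *.
have [y' ey] : exists y', y = y'.+1 by exists y.-1; lia.
subst y.
have h2 : y' * p' * x <= y' * q' * x by rewrite leq_mul2r leq_mul2l; lia.
have h3 : f * (y' * p' * x) <= f * (y' * q' * x) by rewrite leq_mul2l h2 orbT.
have h4 : f * q' + 1 <= N * q'.+1 by nia.
have h5 : (f * q' + 1) * y'.+1 <= N * q'.+1 * y'.+1 by rewrite leq_mul2r h4 orbT.
nia.
Qed.

Lemma totient_le N : totient N <= N.
Proof.
rewrite totient_count_coprime.
apply: leq_trans (_ : \sum_(0 <= d < N) 1 <= N).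
  by apply: leq_sum => d _; case: (coprime N d).
by rewrite sum_nat_const_nat subn0 muln1.
Qed.

(* primes p_1 < ... < p_r are p 0 < ... < p (r-1); exponents alpha 0 .. alpha (r-1) *)
Theorem lemma2p3 (n r : nat) (p alpha : nat -> nat)
  (hr : 2 <= r)
  (hprime : forall j, j < r -> prime (p j))
  (halpha : forall j, j < r -> 0 < alpha j)
  (hmono : forall j k, j < k -> k < r -> p j < p k)
  (hn : n = \prod_(j < r) p j ^ alpha j)
  (i : nat) (hi : i < r.-1) :
  let pi := p i ^ alpha i in
  let pr := p r.-1 ^ alpha r.-1 in
  ((pcn_deg n pi)%:Z - (pcn_deg n pr)%:Z >
   (p i ^ (alpha i).-1)%:Z *
     (((p r.-1).-1 * totient (n %/ (pi * pr)))%:Z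
      - (n %/ (p i ^ (alpha i).-1 * pr))%:Z))%R.
Proof.
cbv zeta. set pi := p i ^ alpha i. set pr := p r.-1 ^ alpha r.-1.
have ir : i < r by lia.
have lr : r.-1 < r by lia.
pose I := Ordinal ir; pose L := Ordinal lr.
have IL : L != I by apply/eqP => /(congr1 val) /=; lia.
pose Np := \prod_(j < r | (j != I) && (j != L)) p j ^ alpha j.
have hn' : n = pi * (pr * Np) by rewrite hn (bigD1 I) //= (bigD1 L).
have pgt0 : forall j, j < r -> 0 < p j by move=> j jr; apply: prime_gt0; apply: hprime.
have cop : forall j k, j < r -> k < r -> j != k -> coprime (p j ^ alpha j) (p k ^ alpha k).
  move=> j k jr kr jk; rewrite coprime_pexpl ?halpha // coprime_pexpr ?halpha //.
  rewrite prime_coprime ?hprime // dvdn_prime2 ?hprime //.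
  case: (ltngtP j k) jk => // h _; [have := hmono _ _ h kr | have := hmono _ _ h jr]; lia.
have copN : forall j, j < r -> (j == i) || (j == r.-1) -> coprime (p j ^ alpha j) Np.
  move=> j jr hj; apply: (big_ind (fun m => coprime (p j ^ alpha j) m)) => //; [exact: coprimen1 | by move=> u v; rewrite coprimeMr => -> -> | ].
  move=> k /andP[kI kL]; apply: cop => //.
  by apply/eqP => ejk; move: hj kI kL; rewrite ejk -!(inj_eq val_inj) /= => /orP[] ->.
have N0 : 0 < Np by apply: prodn_gt0 => j; rewrite expn_gt0 pgt0.
have cIL : coprime pi pr by apply: cop; lia.
have cIN : coprime pi Np by apply: copN; rewrite ?eqxx.
have cLN : coprime pr Np by apply: copN; rewrite ?eqxx ?orbT.
have ai := halpha i ir; have ar := halpha _ lr.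
have pri := hprime i ir; have prr := hprime _ lr.
have pq : p i < p r.-1 by apply: hmono.
have piE : pi = p i * p i ^ (alpha i).-1 by rewrite /pi -expnS prednK.
have prE : pr = p r.-1 * p r.-1 ^ (alpha r.-1).-1 by rewrite /pr -expnS prednK.
have tpi : totient pi = (p i).-1 * p i ^ (alpha i).-1 by rewrite totient_pfactor.
have tpr : totient pr = (p r.-1).-1 * p r.-1 ^ (alpha r.-1).-1 by rewrite totient_pfactor.
have p1 : 1 < p i by apply: prime_gt1.
have q1 : 1 < p r.-1 by apply: prime_gt1.
have x0 : 0 < p i ^ (alpha i).-1 by rewrite expn_gt0 pgt0.
have y0 : 0 < p r.-1 ^ (alpha r.-1).-1 by rewrite expn_gt0 pgt0.
have D1 := deg_formula pi (pr * Np) ltac:(nia) ltac:(nia) ltac:(by rewrite coprimeMr cIL cIN).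
have D2 := deg_formula pr (pi * Np) ltac:(nia) ltac:(nia) ltac:(by rewrite coprimeMr coprime_sym cIL cLN).
rewrite -hn' totient_coprime // in D1.
rewrite mulnCA -hn' totient_coprime // in D2.
have e1 : n %/ (pi * pr) = Np by rewrite hn' mulnA mulKn //; nia.
have e2 : n %/ (p i ^ (alpha i).-1 * pr) = p i * Np.
  have -> : n = (p i ^ (alpha i).-1 * pr) * (p i * Np) by rewrite hn' piE; lia.
  by rewrite mulKn //; nia.
rewrite e1 e2.
have := @arith _ _ _ _ _ _ _ _ _ _ _ _ (totient_le Np) N0 pq x0 y0 piE prE tpr tpi D1 D2.
lia.
Qed.
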